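(* Let $d$ be an even positive integer with $d\notin\{2,4,8\}$. For $x\in\mathbb{R}$ let ${\bm p}_x\in\mathbb{R}^d$ be defined by $({\bm p}_x)_{2i}=\sin(\omega_i x)$, $({\bm p}_x)_{2i+1}=\cos(\omega_i x)$ for $i=0,\dots,\tfrac d2-1$, with $\omega_i=10000^{-2i/d}$. Then the map $\mathbb{N}_{>0}\to\mathbb{R}^d$, $a\mapsto{\bm p}_a$, is injective; consequently the map $\mathbb{N}_{>0}^2\to\mathbb{R}^{2d}$, $(a,b)\mapsto[{\bm p}_a\,\|\,{\bm p}_b]$, is injective.
   Context: $[{\bm u}\,\|\,{\bm v}]$ denotes concatenation of vectors. $\mathbb{N}_{>0}$ denotes the positive integers. *)

(* Defs.v *)
From HB Require Import structures.
From mathcomp Require Import all_boot all_order all_algebra.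
From mathcomp Require Import all_classical all_reals all_analysis.
Set Implicit Arguments. Unset Strict Implicit. Unset Printing Implicit Defensive.
Import Order.TTheory GRing.Theory Num.Theory.
Local Open Scope ring_scope.

Definition omega (R : realType) (d i : nat) : R :=
  (10000%:R : R) `^ (- ((2 * i)%:R / d%:R)).

Definition posenc (R : realType) (d : nat) (x : R) : 'rV[R]_d :=
  \row_(j < d) (if odd j then cos (omega R d j./2 * x)
                else sin (omega R d j./2 * x)).

(* Main.v *)
Require Import Defs.
From HB Require Import structures.
From mathcomp Require Import all_boot all_order all_algebra.
From mathcomp Require Import all_classical all_reals all_analysis.
From mathcomp Require Import ring lra.
Import Order.TTheory GRing.Theory Num.Theory.
Local Open Scope ring_scope.

Section S.
Variable R : realType.

Lemma cos_periodz (y : R) (k : int) : cos (y + k%:~R * (pi *+ 2)) = cos y.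
Proof.
case: k => n.
  by rewrite pmulrn mulr_natl (periodicn (@cosD2pi R)).
rewrite NegzE mulNr -[in RHS](subrK (n.+1%:R * (pi *+ 2)) y).
by rewrite pmulrn mulr_natl (periodicn (@cosD2pi R)).
Qed.

Lemma cos_eq1 (x : R) : cos x = 1 -> exists k : int, x = k%:~R * (pi *+ 2).
Proof.
move=> hx.
have T0 : 0 < pi *+ 2 :> R by rewrite mulrn_wgt0 // pi_gt0.
set k := Num.floor (x / (pi *+ 2)).
exists k.
have /andP[h1 h2] := floor_itv (x / (pi *+ 2)).
rewrite -/k in h1 h2.
set r := x - k%:~R * (pi *+ 2).
have r0 : 0 <= r by rewrite subr_ge0 -ler_pdivlMr.
have r1 : r < pi *+ 2.
  move: h2; rewrite ltr_pdivrMr // rmorphD /= mulrDl mul1r /r; lra.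
have cr : cos r = 1.
  by rewrite -(cos_periodz r k) /r subrK.
apply/eqP; rewrite -subr_eq0 -/r; apply/eqP.
have [rpi|pir] := lerP r pi.
  apply/eqP; apply: contraTT isT => rn0.
  have : cos r < cos 0.
    rewrite ltr_cos ?in_itv /= ?r0 ?rpi ?lexx ?pi_ge0 //.
    by rewrite lt0r rn0.
  by rewrite cr cos0 ltxx.
exfalso.
have : cos (pi *+ 2 - r) < cos 0.
  rewrite ltr_cos ?in_itv /= ?lexx ?pi_ge0 ?subr_gt0 ?subr_ge0 ?(ltW r1) //.
  by rewrite lerBlDr mulr2n lerD2l ltW.
by rewrite cos0 cosB cos2pi sin2pi mul0r addr0 mul1r cr ltxx.
Qed.

Lemma nat_inj_trig (a b : nat) :
  sin (a%:R : R) = sin b%:R -> cos (a%:R : R) = cos b%:R -> a = b.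
Proof.
move=> hs hc.
have : cos (a%:R - b%:R : R) = 1 by rewrite cosB -hs -hc -!expr2 cos2Dsin2.
move=> /cos_eq1 [k hk].
have [k0|kn0] := eqVneq k 0.
  by move: hk; rewrite k0 mul0r => /eqP; rewrite subr_eq0 eqr_nat => /eqP.
exfalso; apply: (@pi_irrationnal R).
exists (((a%:Z - b%:Z)%:~R : rat) / ((k * 2)%:~R)) => //.
rewrite rmorphM /= fmorphV /= !ratr_int rmorphB /= !intrM /= hk -mulrA.
have kR : (k%:~R : R) != 0 by rewrite intr_eq0.
rewrite (_ : 2%:~R = 2%:R :> R) // invfM -mulr_natr.
by rewrite mul1r -mulr_natr; field; rewrite kR.
Qed.
End S.

Lemma posenc_inj (R : realType) (d : nat) : (1 < d)%N ->
  forall a b : nat, posenc d (a%:R : R) = posenc d (b%:R : R) -> a = b.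
Proof.
move=> d1 a b h.
have h0 : (0 < d)%N by apply: ltn_trans d1.
have e0 := congr1 (fun M : 'rV[R]_d => M 0 (Ordinal h0)) h.
have e1 := congr1 (fun M : 'rV[R]_d => M 0 (Ordinal d1)) h.
move: e0 e1; rewrite !mxE /= /omega muln0 mul0r oppr0 powRr0 !mul1r.
exact: nat_inj_trig.
Qed.

Theorem mainTheorem2 (R : realType) (d : nat) :
  (0 < d)%N -> ~~ odd d -> d \notin [:: 2; 4; 8]%N ->
  (forall a b : nat, (0 < a)%N -> (0 < b)%N ->
     posenc d (a%:R : R) = posenc d (b%:R : R) -> a = b) /\
  (forall a b a' b' : nat, (0 < a)%N -> (0 < b)%N -> (0 < a')%N -> (0 < b')%N ->
     row_mx (posenc d (a%:R : R)) (posenc d (b%:R : R))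
       = row_mx (posenc d (a'%:R : R)) (posenc d (b'%:R : R)) ->
     (a, b) = (a', b')).
Proof.
move=> d0 ev _.
have d1 : (1 < d)%N.
  by case: d d0 ev => [|[|d]].
split; first by move=> a b _ _; apply: posenc_inj.
move=> a b a' b' _ _ _ _ /eq_row_mx [h1 h2].
by rewrite (@posenc_inj R d d1 _ _ h1) (@posenc_inj R d d1 _ _ h2).
Qed.
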